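(* For the matching model described in the context, provided the normalising sum is finite, the stationary distribution of the token state descriptor is $$\pi((T_1,n_1,\dots,T_i,n_i))=\pi((0))\prod_{j=1}^i\frac{\lambda_{T_j}}{A(j)\sum_{m=1}^j\lambda_{T_m}}\Big(\frac{\sum_{m=1}^j\lambda_{T_m}}{F_j(T_1,\dots,T_j)}\Big)^{n_j+1}\prod_{m=1}^{\sum_{l=1}^i n_l}\frac1{A(i+m)},$$ for all $i$, distinct $T_1,\dots,T_i$ and $n_j\in\mathbb N_0$, with $\pi((0))$ the normalising constant.
   Context: Parallel FCFS matching model: customer types $c_1,\dots,c_K$, type $c_l$ arriving as an independent Poisson process with rate $\lambda_{t_l}>0$; a finite set of server types, each compatible with some customer types. When $n$ customers are waiting, servers of each server type arrive (independently) at rate $A(n)>0$ ($n\ge1$). An arriving server is matched with the longest-waiting compatible customer, and both leave; if none, the server leaves immediately. Token representation: token $t_l$ corresponds to type $c_l$ and is held by the oldest type-$c_l$ customer waiting. State: $(0)$ or $(T_1,n_1,\dots,T_i,n_i)$ with $T_1,\dots,T_i$ the distinct held tokens ordered by arrival of their holders and $n_j$ the number of non-holding customers arriving between holders of $T_j$ and $T_{j+1}$ (after the holder of $T_i$ for $j=i$). $F_j(T_1,\dots,T_j)$ denotes the number of server types compatible with at least one of the customer types corresponding to $T_1,\dots,T_j$, assumed positive for nonempty tuples. *)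

(* Defs.v *)
From Stdlib Require Import Reals List Arith Bool.
Import ListNotations.
Open Scope R_scope.

(* ---------- Conventions ----------
   Customer types c_0,...,c_{K-1} are the naturals < K (token t_l <-> type l).
   Server types are the naturals < S; [compat s c] says server type s can
   serve customer type c.
   lam c = arrival rate of type c;  A n = arrival rate of each server type
   when n customers are waiting. *)

Definition sumR (l : list R) : R := fold_right Rplus 0 l.
Definition prodR (l : list R) : R := fold_right Rmult 1 l.

(* Detailed state: the sequence of types of the waiting customers, in order
   of arrival (oldest first). [states K n] lists all such states with n
   customers. *)
Fixpoint states (K n : nat) : list (list nat) :=
  match n with
  | O => [[]]
  | S m => flat_map (fun x => map (fun c => x ++ [c]) (seq 0 K)) (states K m)
  end.

Definition valid_state (K : nat) (x : list nat) : Prop :=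
  Forall (fun c => (c < K)%nat) x.

Fixpoint rem_first (p : nat -> bool) (x : list nat) : list nat :=
  match x with
  | [] => []
  | c :: x' => if p c then x' else c :: rem_first p x'
  end.

(* Transition rate q(x,y) of the FCFS matching CTMC on detailed states:
   - arrival of a type-c customer (rate lam c) appends c;
   - arrival of a type-s server (rate A (length x)) removes the longest
     waiting compatible customer, if any (otherwise the server leaves). *)
Definition rate (K nS : nat) (lam A : nat -> R) (compat : nat -> nat -> bool)
  (x y : list nat) : R :=
  sumR (map (fun c => if list_eq_dec Nat.eq_dec y (x ++ [c]) then lam c else 0)
            (seq 0 K))
  + sumR (map (fun s =>
        if existsb (compat s) x then
          (if list_eq_dec Nat.eq_dec y (rem_first (compat s) x)
           then A (length x) else 0)
        else 0) (seq 0 nS)).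

(* all states that can be reached from / lead to x in one jump *)
Definition nbrs (K : nat) (x : list nat) : list (list nat) :=
  states K (S (length x)) ++
  match length x with O => [] | S m => states K m end.

Definition stationary (K nS : nat) (lam A : nat -> R)
  (compat : nat -> nat -> bool) (pi : list nat -> R) : Prop :=
  (forall x, valid_state K x -> 0 <= pi x) /\
  infinite_sum (fun N => sumR (map pi (states K N))) 1 /\
  (forall x, valid_state K x ->
     pi x * sumR (map (rate K nS lam A compat x) (nbrs K x)) =
     sumR (map (fun y => pi y * rate K nS lam A compat y x) (nbrs K x))).

(* ---------- Token state descriptor ----------
   (0) is [], and (T_1,n_1,...,T_i,n_i) is [(T_1,n_1);...;(T_i,n_i)]. *)
Fixpoint incr_last (l : list (nat * nat)) : list (nat * nat) :=
  match l with
  | [] => []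
  | p :: [] => [(fst p, S (snd p))]
  | p :: l' => p :: incr_last l'
  end.

Definition token_step (st : list (nat * nat)) (c : nat) : list (nat * nat) :=
  if existsb (fun p => Nat.eqb (fst p) c) st then incr_last st
  else st ++ [(c, 0%nat)].

Definition token_state (x : list nat) : list (nat * nat) :=
  fold_left token_step x [].

Definition pair_dec : forall p q : nat * nat, {p = q} + {p <> q}.
Proof. decide equality; apply Nat.eq_dec. Defined.

Definition tok_dec := list_eq_dec pair_dec.

(* number of customers in a token state: i + sum n_j *)
Definition tsize (ts : list (nat * nat)) : nat :=
  (length ts + fold_right plus 0%nat (map snd ts))%nat.

Definition valid_token (K : nat) (ts : list (nat * nat)) : Prop :=
  NoDup (map fst ts) /\ Forall (fun T => (T < K)%nat) (map fst ts).

Definition tstates (K N : nat) : list (list (nat * nat)) :=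
  nodup tok_dec (map token_state (states K N)).

Definition token_marginal (K : nat) (pi : list nat -> R)
  (ts : list (nat * nat)) : R :=
  sumR (map (fun x => if tok_dec (token_state x) ts then pi x else 0)
            (states K (tsize ts))).

Definition LamP (lam : nat -> R) (P : list (nat * nat)) : R :=
  sumR (map (fun p => lam (fst p)) P).

Definition Fcount (nS : nat) (compat : nat -> nat -> bool)
  (P : list (nat * nat)) : nat :=
  length (filter (fun s => existsb (fun p => compat s (fst p)) P) (seq 0 nS)).

Definition weight (nS : nat) (lam A : nat -> R) (compat : nat -> nat -> bool)
  (ts : list (nat * nat)) : R :=
  prodR (map (fun j =>
      let P := firstn j ts in
      let Tj := fst (nth (j - 1) ts (0%nat, 0%nat)) in
      let nj := snd (nth (j - 1) ts (0%nat, 0%nat)) in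
      lam Tj / (A j * LamP lam P) *
      (LamP lam P / INR (Fcount nS compat P)) ^ (S nj))
    (seq 1 (length ts)))
  * prodR (map (fun m => / A (length ts + m)%nat)
               (seq 1 (fold_right plus 0%nat (map snd ts)))).

(* Main.v *)
Require Import Defs.
From Stdlib Require Import Reals List Arith Bool Lra Lia FinFun.
Import ListNotations.
Open Scope R_scope.


Lemma sumR_app l1 l2 : sumR (l1 ++ l2) = sumR l1 + sumR l2.
Proof. induction l1; simpl; [lra| rewrite IHl1; lra]. Qed.

Lemma sumR_ext {T} (f g : T -> R) l :
  (forall x, In x l -> f x = g x) -> sumR (map f l) = sumR (map g l).
Proof. intros H; rewrite (map_ext_in f g l H); reflexivity. Qed.

Lemma sumR_plus {T} (f g : T -> R) l :
  sumR (map (fun x => f x + g x) l) = sumR (map f l) + sumR (map g l).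
Proof. induction l; simpl; [lra| rewrite IHl; lra]. Qed.

Lemma sumR_scal {T} (a : R) (f : T -> R) l :
  sumR (map (fun x => a * f x) l) = a * sumR (map f l).
Proof. induction l; simpl; [lra| rewrite IHl; lra]. Qed.

Lemma sumR_scalr {T} (a : R) (f : T -> R) l :
  sumR (map (fun x => f x * a) l) = sumR (map f l) * a.
Proof. induction l; simpl; [lra| rewrite IHl; lra]. Qed.

Lemma sumR_zero {T} (f : T -> R) l :
  (forall x, In x l -> f x = 0) -> sumR (map f l) = 0.
Proof. induction l; simpl; intros H; [lra|].
  rewrite H by auto. rewrite IHl by (intros; apply H; auto). lra. Qed.

Lemma sumR_nonneg {T} (f : T -> R) l :
  (forall x, In x l -> 0 <= f x) -> 0 <= sumR (map f l).
Proof. induction l; simpl; intros H; [lra|].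
  assert (0 <= sumR (map f l)) by (apply IHl; intros; apply H; auto).
  specialize (H a (or_introl eq_refl)). lra. Qed.

Lemma sumR_le {T} (f g : T -> R) l :
  (forall x, In x l -> f x <= g x) -> sumR (map f l) <= sumR (map g l).
Proof. induction l; simpl; intros H; [lra|].
  specialize (H a (or_introl eq_refl)) as H1. assert (sumR (map f l) <= sumR (map g l)) by (apply IHl; intros; apply H; auto). lra. Qed.

Lemma sumR_swap {T U} (f : T -> U -> R) l1 l2 :
  sumR (map (fun x => sumR (map (fun y => f x y) l2)) l1) =
  sumR (map (fun y => sumR (map (fun x => f x y) l1)) l2).
Proof.
  induction l1; simpl.
  - symmetry; apply sumR_zero; auto.
  - rewrite IHl1. rewrite <- sumR_plus. reflexivity.
Qed.

Lemma sumR_flat_map {T U} (f : U -> R) (g : T -> list U) l :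
  sumR (map f (flat_map g l)) = sumR (map (fun x => sumR (map f (g x))) l).
Proof. induction l; simpl; auto. rewrite map_app, sumR_app, IHl. reflexivity. Qed.

Lemma sumR_single {T} (f : T -> R) l t :
  NoDup l -> In t l -> (forall y, In y l -> y <> t -> f y = 0) ->
  sumR (map f l) = f t.
Proof.
  induction l as [|a l IH]; simpl; intros Hnd Hin H; [contradiction|].
  inversion Hnd; subst. destruct Hin as [<-|Hin].
  - rewrite sumR_zero; [lra|]. intros y Hy. apply H; auto. intros ->; auto.
  - rewrite IH; auto. rewrite H; auto. lra. intros ->; auto.
Qed.

Lemma sumR_all_zero {T} (f : T -> R) l :
  (forall x, In x l -> 0 <= f x) -> sumR (map f l) = 0 -> forall x, In x l -> f x = 0.
Proof.
  induction l as [|a l IH]; simpl; intros H Hs x Hx; [contradiction|].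
  assert (0 <= sumR (map f l)) by (apply sumR_nonneg; auto).
  assert (0 <= f a) by auto.
  destruct Hx as [<-|Hx]; [lra|]. apply IH; auto. lra.
Qed.

Lemma sumR_pos {T} (f : T -> R) l t :
  (forall x, In x l -> 0 <= f x) -> In t l -> 0 < f t -> 0 < sumR (map f l).
Proof.
  intros H Hin Ht. destruct (Rle_lt_dec (sumR (map f l)) 0) as [Hle|]; auto.
  assert (sumR (map f l) = 0). { assert (0 <= sumR (map f l)) by (apply sumR_nonneg; auto). lra. }
  pose proof (sumR_all_zero f l H H0 t Hin). lra.
Qed.

Lemma prodR_app l1 l2 : prodR (l1 ++ l2) = prodR l1 * prodR l2.
Proof. induction l1; simpl; [lra| rewrite IHl1; lra]. Qed.

Lemma seq_NoDup' a n : NoDup (seq a n).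
Proof. apply seq_NoDup. Qed.

Lemma sum_seq_ind K d (f : nat -> R) :
  (d < K)%nat -> sumR (map (fun c => if Nat.eq_dec c d then f c else 0) (seq 0 K)) = f d.
Proof.
  intros Hd. rewrite (sumR_single _ _ d); [ | apply seq_NoDup | apply in_seq; lia | ].
  - destruct (Nat.eq_dec d d); congruence.
  - intros y _ Hy. destruct (Nat.eq_dec y d); congruence.
Qed.

Lemma sum_ind_count {T} (b : T -> bool) (a : R) l :
  sumR (map (fun s => if b s then a else 0) l) = INR (length (filter b l)) * a.
Proof. induction l; [simpl; lra|]. cbn [map filter]. destruct (b a0).
  - cbn [length]. rewrite S_INR. unfold sumR in *; cbn [fold_right]. rewrite IHl. ring.
  - unfold sumR in *; cbn [fold_right]. rewrite IHl. lra. Qed.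


Lemma valid_app K x y : valid_state K (x ++ y) <-> valid_state K x /\ valid_state K y.
Proof. unfold valid_state. rewrite Forall_app. tauto. Qed.

Lemma states_in K n y : In y (states K n) -> length y = n /\ valid_state K y.
Proof.
  revert y; induction n; simpl; intros y H.
  - destruct H as [<-|[]]. split; [reflexivity| constructor].
  - apply in_flat_map in H as [x [Hx Hy]]. apply in_map_iff in Hy as [c [<- Hc]].
    apply IHn in Hx as [Hl Hv]. apply in_seq in Hc. split.
    + rewrite length_app; simpl; lia.
    + apply valid_app; split; auto. constructor; [lia| constructor].
Qed.

Lemma states_complete K y : valid_state K y -> In y (states K (length y)).
Proof.
  induction y as [|c y IH] using rev_ind; simpl; intros Hv; [auto|].
  apply valid_app in Hv as [Hv Hc]. inversion Hc; subst.
  rewrite length_app; simpl. rewrite Nat.add_1_r. simpl.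
  apply in_flat_map. exists y; split; auto. apply in_map_iff. exists c; split; [reflexivity|]. apply in_seq. lia.
Qed.

Lemma states_NoDup K n : NoDup (states K n).
Proof.
  induction n; simpl.
  - repeat constructor; auto.
  - induction (states K n) as [|x l IH]; simpl; [constructor|].
    inversion IHn; subst. apply NoDup_app.
    + apply Injective_map_NoDup; [|apply seq_NoDup].
      intros a b H. apply app_inj_tail in H. tauto.
    + apply IH; auto.
    + intros a Ha Hb. apply in_map_iff in Ha as [c [<- _]].
      apply in_flat_map in Hb as [x' [Hx' Hb]]. apply in_map_iff in Hb as [c' [Heq _]].
      apply app_inj_tail in Heq as [-> _]. auto.
Qed.

Lemma sum_states_single K n y (f : list nat -> R) :
  valid_state K y -> length y = n ->
  (forall z, In z (states K n) -> z <> y -> f z = 0) ->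
  sumR (map f (states K n)) = f y.
Proof.
  intros Hv Hl H. apply sumR_single; auto. apply states_NoDup.
  subst. apply states_complete; auto.
Qed.

Lemma sum_states_S K n (f : list nat -> R) :
  sumR (map f (states K (S n))) =
  sumR (map (fun y => sumR (map (fun c => f (y ++ [c])) (seq 0 K))) (states K n)).
Proof.
  simpl. rewrite sumR_flat_map. apply sumR_ext. intros x _. rewrite map_map. reflexivity.
Qed.


Definition Fl (nS : nat) (compat : nat -> nat -> bool) (x : list nat) : R :=
  sumR (map (fun s => if existsb (compat s) x then 1 else 0) (seq 0 nS)).

Fixpoint muP (nS : nat) (lam A : nat -> R) (compat : nat -> nat -> bool)
  (p z : list nat) : R :=
  match z with
  | [] => 1
  | c :: z' => lam c / (A (S (length p)) * Fl nS compat (p ++ [c])) *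
               muP nS lam A compat (p ++ [c]) z'
  end.

Definition mu nS lam A compat (x : list nat) : R := muP nS lam A compat [] x.

Lemma Fl_ext nS compat p q :
  (forall s, existsb (compat s) p = existsb (compat s) q) -> Fl nS compat p = Fl nS compat q.
Proof. intros H. unfold Fl. apply sumR_ext. intros s _. rewrite H. reflexivity. Qed.

Lemma Fl_nonneg nS compat p : 0 <= Fl nS compat p.
Proof. unfold Fl. apply sumR_nonneg. intros s _. destruct existsb; lra. Qed.

Lemma Fl_pos K nS compat
  (hF : forall c, (c < K)%nat -> exists s, (s < nS)%nat /\ compat s c = true) p c :
  In c p -> (c < K)%nat -> 0 < Fl nS compat p.
Proof.
  intros Hin Hc. destruct (hF c Hc) as [s [Hs Hcs]]. unfold Fl.
  apply (sumR_pos _ _ s).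
  - intros x _. destruct existsb; lra.
  - apply in_seq; lia.
  - replace (existsb (compat s) p) with true; [lra|]. symmetry. apply existsb_exists. eauto.
Qed.

Lemma muP_app nS lam A compat p z1 z2 :
  muP nS lam A compat p (z1 ++ z2) = muP nS lam A compat p z1 * muP nS lam A compat (p ++ z1) z2.
Proof.
  revert p; induction z1 as [|c z1 IH]; intros p; simpl.
  - rewrite app_nil_r. lra.
  - rewrite IH. rewrite <- app_assoc. simpl. lra.
Qed.

Lemma muP_ext nS lam A compat p q z :
  length p = length q -> (forall s, existsb (compat s) p = existsb (compat s) q) ->
  muP nS lam A compat p z = muP nS lam A compat q z.
Proof.
  revert p q; induction z as [|c z IH]; intros p q Hl He; simpl; auto.
  rewrite Hl. rewrite (Fl_ext nS compat (p ++ [c]) (q ++ [c])).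
  - rewrite (IH (p ++ [c]) (q ++ [c])); auto.
    + rewrite !length_app; lia.
    + intros s; rewrite !existsb_app, He; auto.
  - intros s; rewrite !existsb_app, He; auto.
Qed.

Lemma mu_app nS lam A compat x z :
  mu nS lam A compat (x ++ z) = mu nS lam A compat x * muP nS lam A compat x z.
Proof. unfold mu. rewrite muP_app. reflexivity. Qed.

Lemma mu_snoc nS lam A compat x c :
  mu nS lam A compat (x ++ [c]) =
  mu nS lam A compat x * (lam c / (A (S (length x)) * Fl nS compat (x ++ [c]))).
Proof. rewrite mu_app. simpl. lra. Qed.

Lemma muP_pos K nS lam A compat
  (hlam : forall c, (c < K)%nat -> 0 < lam c)
  (hA : forall n, (1 <= n)%nat -> 0 < A n)
  (hF : forall c, (c < K)%nat -> exists s, (s < nS)%nat /\ compat s c = true) p z :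
  valid_state K z -> 0 < muP nS lam A compat p z.
Proof.
  revert p; induction z as [|c z IH]; intros p Hv; simpl; [lra|].
  inversion Hv; subst.
  assert (0 < Fl nS compat (p ++ [c])) by (apply (Fl_pos K nS compat hF _ c); auto; apply in_app_iff; simpl; auto).
  assert (0 < A (S (length p))) by (apply hA; lia).
  assert (0 < lam c) by auto.
  apply Rmult_lt_0_compat; auto.
  apply Rdiv_lt_0_compat; auto. apply Rmult_lt_0_compat; auto.
Qed.

Lemma mu_pos K nS lam A compat
  (hlam : forall c, (c < K)%nat -> 0 < lam c)
  (hA : forall n, (1 <= n)%nat -> 0 < A n)
  (hF : forall c, (c < K)%nat -> exists s, (s < nS)%nat /\ compat s c = true) x :
  valid_state K x -> 0 < mu nS lam A compat x.
Proof. apply muP_pos; auto. Qed.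

Lemma mu_swap K nS lam A compat
  (hA : forall n, (1 <= n)%nat -> 0 < A n)
  (hF : forall c, (c < K)%nat -> exists s, (s < nS)%nat /\ compat s c = true) p c d z :
  (c < K)%nat -> (d < K)%nat ->
  mu nS lam A compat (p ++ c :: d :: z) * Fl nS compat (p ++ [c]) =
  mu nS lam A compat (p ++ d :: c :: z) * Fl nS compat (p ++ [d]).
Proof.
  intros Hc Hd. rewrite !mu_app. simpl.
  rewrite <- !app_assoc. simpl.
  assert (He : forall s, existsb (compat s) (p ++ [c; d]) = existsb (compat s) (p ++ [d; c])).
  { intros s. rewrite !existsb_app. simpl. destruct (compat s c), (compat s d), (existsb (compat s) p); reflexivity. }
  rewrite (Fl_ext nS compat (p ++ [c; d]) (p ++ [d; c])) by auto.
  rewrite (muP_ext nS lam A compat (p ++ [c; d]) (p ++ [d; c])) by (auto; rewrite !length_app; reflexivity).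
  rewrite !length_app. simpl.
  assert (0 < Fl nS compat (p ++ [c])) by (apply (Fl_pos K nS compat hF _ c); auto; apply in_app_iff; simpl; auto).
  assert (0 < Fl nS compat (p ++ [d])) by (apply (Fl_pos K nS compat hF _ d); auto; apply in_app_iff; simpl; auto).
  assert (0 < Fl nS compat (p ++ [d; c])) by (apply (Fl_pos K nS compat hF _ d); auto; apply in_app_iff; simpl; auto).
  assert (0 < A (S (length p))) by (apply hA; lia).
  assert (0 < A (S (length p + 1))) by (apply hA; lia).
  field. repeat split; lra.
Qed.


Lemma rem_first_app_true p y w :
  existsb p y = true -> rem_first p (y ++ w) = rem_first p y ++ w.
Proof. induction y as [|a y IH]; simpl; [discriminate|].
  destruct (p a); simpl; auto. intros H; rewrite IH; auto. Qed.

Lemma rem_first_app_false p y w :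
  existsb p y = false -> rem_first p (y ++ w) = y ++ rem_first p w.
Proof. induction y as [|a y IH]; simpl; auto.
  destruct (p a); simpl; [discriminate|]. intros H; rewrite IH; auto. Qed.

Lemma rem_first_length p y :
  existsb p y = true -> S (length (rem_first p y)) = length y.
Proof. induction y as [|a y IH]; simpl; [discriminate|].
  destruct (p a); simpl; auto. Qed.

Lemma rem_first_valid K p y : valid_state K y -> valid_state K (rem_first p y).
Proof. induction y as [|a y IH]; simpl; auto. intros H; inversion H; subst.
  destruct (p a); auto. constructor; auto. apply IH; auto. Qed.

Definition Tsum K nS lam A compat (x z : list nat) : R :=
  sumR (map (fun s => sumR (map (fun y =>
     if existsb (compat s) y then
       if list_eq_dec Nat.eq_dec x (rem_first (compat s) y)
       then mu nS lam A compat (y ++ z) else 0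
     else 0) (states K (S (length x))))) (seq 0 nS)).

Lemma Fl_snoc_diff nS compat x c :
  Fl nS compat (x ++ [c]) = Fl nS compat x +
    sumR (map (fun s => if existsb (compat s) x then 0 else if compat s c then 1 else 0) (seq 0 nS)).
Proof.
  unfold Fl. rewrite <- sumR_plus. apply sumR_ext. intros s _.
  rewrite existsb_app. simpl. destruct (existsb (compat s) x), (compat s c); simpl; lra.
Qed.

Lemma Tsum_closed K nS lam A compat
  (hA : forall n, (1 <= n)%nat -> 0 < A n)
  (hF : forall c, (c < K)%nat -> exists s, (s < nS)%nat /\ compat s c = true) x :
  valid_state K x -> forall z,
  Tsum K nS lam A compat x z =
  sumR (map (fun c => mu nS lam A compat (x ++ c :: z) * Fl nS compat (x ++ [c])) (seq 0 K)).
Proof.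
  induction x as [|d x IH] using rev_ind; intros Hv z.
  - unfold Tsum. simpl length.
    transitivity (sumR (map (fun s => sumR (map (fun c =>
       if compat s c then mu nS lam A compat (c :: z) else 0) (seq 0 K))) (seq 0 nS))).
    + apply sumR_ext. intros s _. rewrite sum_states_S. simpl. rewrite Rplus_0_r.
      apply sumR_ext. intros c _. simpl. destruct (compat s c); simpl; auto.
    + rewrite sumR_swap. apply sumR_ext. intros c _. simpl.
      unfold Fl. rewrite <- sumR_scal. apply sumR_ext. intros s _. simpl.
      destruct (compat s c); simpl; lra.
  - apply valid_app in Hv as [Hv Hd]. inversion Hd as [|? ? Hd' _]; subst.
    set (x1 := x ++ [d]).
    set (f := fun c => mu nS lam A compat (x1 ++ c :: z)).
    assert (Hstep : Tsum K nS lam A compat x1 z =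
       Tsum K nS lam A compat x (d :: z) +
       sumR (map (fun s => if existsb (compat s) x1 then 0 else
          sumR (map (fun c => if compat s c then f c else 0) (seq 0 K))) (seq 0 nS))).
    { unfold Tsum. rewrite <- sumR_plus. apply sumR_ext. intros s _.
      assert (Hlen : length x1 = S (length x)) by (unfold x1; rewrite length_app; simpl; lia).
      rewrite Hlen. rewrite sum_states_S.
      transitivity (sumR (map (fun y' =>
        (if existsb (compat s) y' then
          if list_eq_dec Nat.eq_dec x (rem_first (compat s) y')
          then mu nS lam A compat (y' ++ d :: z) else 0 else 0) +
        (if list_eq_dec Nat.eq_dec y' x1 then
          (if existsb (compat s) x1 then 0 else
            sumR (map (fun c => if compat s c then f c else 0) (seq 0 K))) else 0))
        (states K (S (length x))))).
      - apply sumR_ext. intros y' Hy'.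
        apply states_in in Hy' as [Hly' Hvy'].
        destruct (existsb (compat s) y') eqn:Ey.
        + assert (Hz : (if list_eq_dec Nat.eq_dec y' x1 then
             (if existsb (compat s) x1 then 0 else
              sumR (map (fun c => if compat s c then f c else 0) (seq 0 K))) else 0) = 0).
          { destruct (list_eq_dec Nat.eq_dec y' x1) as [->|]; auto. rewrite Ey. auto. }
          rewrite Hz, Rplus_0_r.
          transitivity (sumR (map (fun c => if Nat.eq_dec c d then
              (if list_eq_dec Nat.eq_dec x (rem_first (compat s) y') then
                 mu nS lam A compat (y' ++ d :: z) else 0) else 0) (seq 0 K))).
          * apply sumR_ext. intros c _. rewrite existsb_app, Ey. simpl.
            rewrite rem_first_app_true by auto.
            destruct (Nat.eq_dec c d) as [->|Hcd].
            -- destruct (list_eq_dec Nat.eq_dec x1 (rem_first (compat s) y' ++ [d])) as [E1|E1];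
               destruct (list_eq_dec Nat.eq_dec x (rem_first (compat s) y')) as [E2|E2].
               ++ rewrite <- app_assoc. reflexivity.
               ++ exfalso. apply E2. unfold x1 in E1. apply app_inj_tail in E1. tauto.
               ++ exfalso. apply E1. unfold x1; rewrite E2. reflexivity.
               ++ reflexivity.
            -- destruct (list_eq_dec Nat.eq_dec x1 (rem_first (compat s) y' ++ [c])) as [E1|E1]; auto.
               exfalso. unfold x1 in E1. apply app_inj_tail in E1. destruct E1; congruence.
          * apply (sum_seq_ind K d (fun c => if list_eq_dec Nat.eq_dec x (rem_first (compat s) y') then
                 mu nS lam A compat (y' ++ d :: z) else 0)); auto.
        + rewrite Rplus_0_l.
          transitivity (sumR (map (fun c => if list_eq_dec Nat.eq_dec y' x1 then
              (if compat s c then f c else 0) else 0) (seq 0 K))).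
          * apply sumR_ext. intros c _. rewrite existsb_app, Ey. simpl.
            rewrite rem_first_app_false by auto. simpl. rewrite Bool.orb_false_r.
            destruct (compat s c) eqn:Ec.
            -- rewrite app_nil_r.
               destruct (list_eq_dec Nat.eq_dec x1 y') as [E1|E1];
               destruct (list_eq_dec Nat.eq_dec y' x1) as [E2|E2]; try congruence.
               subst. unfold f. rewrite <- app_assoc. reflexivity.
            -- destruct (list_eq_dec Nat.eq_dec y' x1); reflexivity.
          * destruct (list_eq_dec Nat.eq_dec y' x1) as [E2|E2].
            -- subst y'. rewrite Ey. reflexivity.
            -- apply sumR_zero. auto.
      - rewrite sumR_plus. cbv beta. f_equal.
        rewrite (sum_states_single K _ x1).
          * destruct (list_eq_dec Nat.eq_dec x1 x1); congruence.
          * apply valid_app; split; auto.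
          * auto.
          * intros w _ Hw. destruct (list_eq_dec Nat.eq_dec w x1); congruence. }
    rewrite Hstep, IH by auto.
    assert (H1 : sumR (map (fun c => mu nS lam A compat (x ++ c :: d :: z) * Fl nS compat (x ++ [c])) (seq 0 K))
              = sumR (map (fun c => f c * Fl nS compat x1) (seq 0 K))).
    { apply sumR_ext. intros c Hc. apply in_seq in Hc.
      rewrite (mu_swap K nS lam A compat hA hF x c d z) by lia.
      unfold f, x1. rewrite <- app_assoc. reflexivity. }
    rewrite H1.
    assert (H2 : sumR (map (fun s => if existsb (compat s) x1 then 0 else
          sumR (map (fun c => if compat s c then f c else 0) (seq 0 K))) (seq 0 nS)) =
        sumR (map (fun c => f c * (Fl nS compat (x1 ++ [c]) - Fl nS compat x1)) (seq 0 K))).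
    { transitivity (sumR (map (fun s => sumR (map (fun c =>
          f c * (if existsb (compat s) x1 then 0 else if compat s c then 1 else 0)) (seq 0 K))) (seq 0 nS))).
      - apply sumR_ext. intros s _. destruct (existsb (compat s) x1).
        + symmetry. apply sumR_zero. intros; lra.
        + apply sumR_ext. intros c _. destruct (compat s c); lra.
      - rewrite sumR_swap. apply sumR_ext. intros c _.
        rewrite sumR_scal. rewrite (Fl_snoc_diff nS compat x1 c). f_equal. ring. }
    rewrite H2. rewrite <- sumR_plus. apply sumR_ext. intros c _. unfold f. ring.
Qed.


Definition LamS K (lam : nat -> R) := sumR (map lam (seq 0 K)).

Definition arr K (lam : nat -> R) (y x : list nat) : R :=
  sumR (map (fun c => if list_eq_dec Nat.eq_dec x (y ++ [c]) then lam c else 0) (seq 0 K)).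
Definition srv nS (A : nat -> R) compat (y x : list nat) : R :=
  sumR (map (fun s =>
        if existsb (compat s) y then
          (if list_eq_dec Nat.eq_dec x (rem_first (compat s) y)
           then A (length y) else 0)
        else 0) (seq 0 nS)).

Lemma rate_split K nS lam A compat y x :
  rate K nS lam A compat y x = arr K lam y x + srv nS A compat y x.
Proof. reflexivity. Qed.

Lemma arr_len K lam y x : length x <> S (length y) -> arr K lam y x = 0.
Proof. intros H. unfold arr. apply sumR_zero. intros c _.
  destruct (list_eq_dec Nat.eq_dec x (y ++ [c])) as [->|]; auto.
  rewrite length_app in H; simpl in H; lia. Qed.

Lemma srv_len nS A compat y x : S (length x) <> length y -> srv nS A compat y x = 0.
Proof. intros H. unfold srv. apply sumR_zero. intros s _.
  destruct (existsb (compat s) y) eqn:E; auto.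
  destruct (list_eq_dec Nat.eq_dec x (rem_first (compat s) y)) as [->|]; auto.
  rewrite rem_first_length in H; auto; lia. Qed.

Lemma arr_nonneg K lam (hlam : forall c, (c < K)%nat -> 0 < lam c) y x : 0 <= arr K lam y x.
Proof. unfold arr. apply sumR_nonneg. intros c Hc. apply in_seq in Hc.
  destruct list_eq_dec; [|lra]. specialize (hlam c ltac:(lia)). lra. Qed.

Lemma srv_nonneg nS A compat (hA : forall n, (1 <= n)%nat -> 0 < A n) y x :
  0 <= srv nS A compat y x.
Proof. unfold srv. apply sumR_nonneg. intros s _.
  destruct (existsb (compat s) y) eqn:E; [|lra]. destruct list_eq_dec; [|lra].
  assert (0 < A (length y)); [|lra]. apply hA. destruct y; simpl in *; [discriminate| lia]. Qed.

Lemma rate_nonneg K nS lam A compat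
  (hlam : forall c, (c < K)%nat -> 0 < lam c) (hA : forall n, (1 <= n)%nat -> 0 < A n) y x :
  0 <= rate K nS lam A compat y x.
Proof. rewrite rate_split. pose proof (arr_nonneg K lam hlam y x).
  pose proof (srv_nonneg nS A compat hA y x). lra. Qed.

Lemma arr_snoc K lam y x d : (d < K)%nat ->
  arr K lam y (x ++ [d]) = if list_eq_dec Nat.eq_dec y x then lam d else 0.
Proof.
  intros Hd. unfold arr.
  destruct (list_eq_dec Nat.eq_dec y x) as [->|Hne].
  - rewrite <- (sum_seq_ind K d lam Hd). apply sumR_ext. intros c _.
    destruct (list_eq_dec Nat.eq_dec (x ++ [d]) (x ++ [c])) as [E|E];
    destruct (Nat.eq_dec c d) as [E'|E']; subst; auto.
    + apply app_inj_tail in E. destruct E; congruence.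
    + congruence.
  - apply sumR_zero. intros c _.
    destruct (list_eq_dec Nat.eq_dec (x ++ [d]) (y ++ [c])) as [E|E]; auto.
    apply app_inj_tail in E. destruct E; congruence.
Qed.

Lemma row_up K nS lam A compat y : valid_state K y ->
  sumR (map (rate K nS lam A compat y) (states K (S (length y)))) = LamS K lam.
Proof.
  intros Hv.
  rewrite (sumR_ext _ (fun x => arr K lam y x + srv nS A compat y x)) by (intros; apply rate_split).
  rewrite sumR_plus. rewrite (sumR_zero (fun x => srv nS A compat y x)).
  2:{ intros x Hx. apply states_in in Hx as [Hl _]. apply srv_len. lia. }
  rewrite Rplus_0_r. unfold arr. rewrite sumR_swap. unfold LamS. apply sumR_ext.
  intros c Hc. apply in_seq in Hc.
  rewrite (sum_states_single K _ (y ++ [c])).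
  - destruct list_eq_dec; congruence.
  - apply valid_app; split; auto. constructor; [lia|constructor].
  - rewrite length_app; simpl; lia.
  - intros z _ Hz. destruct list_eq_dec; congruence.
Qed.

Lemma row_down K nS lam A compat y m : valid_state K y -> length y = S m ->
  sumR (map (rate K nS lam A compat y) (states K m)) = A (length y) * Fl nS compat y.
Proof.
  intros Hv Hl.
  rewrite (sumR_ext _ (fun x => arr K lam y x + srv nS A compat y x)) by (intros; apply rate_split).
  rewrite sumR_plus. rewrite (sumR_zero (fun x => arr K lam y x)).
  2:{ intros x Hx. apply states_in in Hx as [Hl' _]. apply arr_len. lia. }
  rewrite Rplus_0_l. unfold srv. rewrite sumR_swap. unfold Fl. rewrite <- sumR_scal.
  apply sumR_ext. intros s _.
  destruct (existsb (compat s) y) eqn:E.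
  - rewrite (sum_states_single K _ (rem_first (compat s) y)).
    + destruct list_eq_dec; [lra|congruence].
    + apply rem_first_valid; auto.
    + pose proof (rem_first_length _ _ E). lia.
    + intros z _ Hz. destruct list_eq_dec; congruence.
  - rewrite sumR_zero; [lra|]. auto.
Qed.

Lemma Fl_nil nS compat : Fl nS compat [] = 0.
Proof. unfold Fl. apply sumR_zero. intros; simpl; reflexivity. Qed.

Lemma out_rate K nS lam A compat y : valid_state K y ->
  sumR (map (rate K nS lam A compat y) (nbrs K y)) = LamS K lam + A (length y) * Fl nS compat y.
Proof.
  intros Hv. unfold nbrs. rewrite map_app, sumR_app, row_up by auto.
  destruct (length y) eqn:Hl.
  - destruct y; [|discriminate]. rewrite Fl_nil. simpl. lra.
  - rewrite <- Hl. rewrite row_down; auto.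
Qed.

Lemma mu_balance K nS lam A compat
  (hlam : forall c, (c < K)%nat -> 0 < lam c)
  (hA : forall n, (1 <= n)%nat -> 0 < A n)
  (hF : forall c, (c < K)%nat -> exists s, (s < nS)%nat /\ compat s c = true) x :
  valid_state K x ->
  mu nS lam A compat x * sumR (map (rate K nS lam A compat x) (nbrs K x)) =
  sumR (map (fun y => mu nS lam A compat y * rate K nS lam A compat y x) (nbrs K x)).
Proof.
  intros Hv. rewrite out_rate by auto. unfold nbrs. rewrite map_app, sumR_app.
  assert (Hup : sumR (map (fun y => mu nS lam A compat y * rate K nS lam A compat y x)
                   (states K (S (length x)))) = mu nS lam A compat x * LamS K lam).
  { transitivity (A (S (length x)) * Tsum K nS lam A compat x []).
    - unfold Tsum. rewrite sumR_swap. rewrite <- sumR_scal. apply sumR_ext.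
      intros y Hy. apply states_in in Hy as [Hly _].
      rewrite rate_split, arr_len by lia. rewrite Rplus_0_l. unfold srv.
      rewrite <- sumR_scal, <- sumR_scal. apply sumR_ext. intros s _.
      rewrite app_nil_r, Hly.
      destruct existsb; [destruct list_eq_dec|]; lra.
    - rewrite (Tsum_closed K nS lam A compat hA hF x Hv []).
      rewrite <- sumR_scal. unfold LamS. rewrite <- sumR_scal. apply sumR_ext.
      intros c Hc. apply in_seq in Hc. rewrite mu_snoc.
      assert (0 < Fl nS compat (x ++ [c])) by (apply (Fl_pos K nS compat hF _ c); [apply in_app_iff; simpl; auto | lia]).
      assert (0 < A (S (length x))) by (apply hA; lia).
      field. lra. }
  rewrite Hup.
  destruct x as [|d0 x0] using rev_ind.
  - simpl. rewrite Fl_nil. lra.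
  - clear IHx0. apply valid_app in Hv as [Hv0 Hd]. inversion Hd as [|? ? Hd' _]; subst.
    rewrite length_app. simpl. rewrite Nat.add_1_r.
    rewrite (sum_states_single K _ x0).
    + rewrite rate_split, srv_len by (rewrite length_app; simpl; lia).
      rewrite arr_snoc by auto. destruct list_eq_dec; [|congruence].
      rewrite mu_snoc.
      assert (0 < Fl nS compat (x0 ++ [d0])) by (apply (Fl_pos K nS compat hF _ d0); [apply in_app_iff; simpl; auto | lia]).
      assert (0 < A (S (length x0))) by (apply hA; lia).
      field. lra.
    + auto.
    + auto.
    + intros y Hy Hne. rewrite rate_split, srv_len.
      * rewrite arr_snoc by auto. destruct list_eq_dec; [congruence|lra].
      * apply states_in in Hy as [Hly _]. rewrite length_app; simpl; lia.
Qed.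


Lemma terms_to_0 a l : infinite_sum a l ->
  forall eps, eps > 0 -> exists N, forall n, (n >= N)%nat -> Rabs (a n) < eps.
Proof.
  intros H eps He. destruct (H (eps/2)) as [N HN]; [lra|].
  exists (S N). intros n Hn. destruct n as [|n]; [lia|].
  assert (H1 := HN n ltac:(lia)). assert (H2 := HN (S n) ltac:(lia)).
  unfold Rdist in *. simpl in H2.
  replace (a (S n)) with ((sum_f_R0 a n + a (S n) - l) - (sum_f_R0 a n - l)) by ring.
  eapply Rle_lt_trans; [apply Rabs_triang|]. rewrite Rabs_Ropp. lra.
Qed.

Definition prevR (U : nat -> R) (N : nat) : R := match N with O => 0 | S m => U m end.

Lemma abstract_tele (D U Dn : nat -> R) :
  (forall N, D N = U N + Dn N - prevR U N - Dn (S N)) -> Dn 0%nat = 0 ->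
  forall M, sum_f_R0 D M = U M - Dn (S M).
Proof.
  intros HD H0 M. induction M; simpl.
  - rewrite HD. simpl. lra.
  - rewrite IHM, HD. simpl. lra.
Qed.

Lemma partial_ge (D : nat -> R) : (forall N, 0 <= D N) ->
  forall n M, (n <= M)%nat -> D n <= sum_f_R0 D M.
Proof.
  intros Hp n M HM. induction M.
  - assert (n = 0%nat) by lia. subst. simpl. lra.
  - destruct (Nat.eq_dec n (S M)) as [->|Hne].
    + simpl. assert (0 <= sum_f_R0 D M). { clear -Hp. induction M; simpl; auto. specialize (Hp (S M)); lra. }
      lra.
    + simpl. specialize (Hp (S M)). assert (D n <= sum_f_R0 D M) by (apply IHM; lia). lra.
Qed.

Lemma abstract_zero (D U Dn p : nat -> R) (L l : R) :
  0 <= L -> (forall N, 0 <= D N) -> (forall M, sum_f_R0 D M = U M - Dn (S M)) ->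
  (forall M, 0 <= Dn M) -> (forall M, U M <= L * p M) -> (forall M, 0 <= p M) ->
  infinite_sum p l -> forall n, D n = 0.
Proof.
  intros HL HD Hs HDn HU Hp Hinf n.
  destruct (Rle_lt_dec (D n) 0) as [Hle|Hgt]; [specialize (HD n); lra|].
  destruct (terms_to_0 p l Hinf (D n / (L + 1))) as [N HN].
  { apply Rdiv_lt_0_compat; lra. }
  set (M := Nat.max N n).
  assert (H1 := partial_ge D HD n M ltac:(unfold M; lia)).
  rewrite Hs in H1. specialize (HDn (S M)). specialize (HU M).
  specialize (HN M ltac:(unfold M; lia)). rewrite Rabs_right in HN by (apply Rle_ge; auto).
  assert (L * p M <= L * (D n / (L + 1))) by (apply Rmult_le_compat_l; lra).
  assert (L * (D n / (L + 1)) < D n).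
  { apply (Rmult_lt_reg_r (L + 1)); [lra|]. field_simplify; [|lra]. nra. }
  lra.
Qed.

Lemma nbrs_len K x N : length x = N ->
  nbrs K x = states K (S N) ++ match N with O => [] | S m => states K m end.
Proof. intros H. unfold nbrs. rewrite H. reflexivity. Qed.

Lemma Rdiv_le_0_compat a b : 0 <= a -> 0 < b -> 0 <= a / b.
Proof. intros Ha Hb. unfold Rdiv. apply Rmult_le_pos; auto. left. apply Rinv_0_lt_compat; auto. Qed.


Lemma uniq_step K nS lam A compat
  (hlam : forall c, (c < K)%nat -> 0 < lam c)
  (hA : forall n, (1 <= n)%nat -> 0 < A n)
  (hF : forall c, (c < K)%nat -> exists s, (s < nS)%nat /\ compat s c = true)
  pi (Hst : stationary K nS lam A compat pi) z y :
  valid_state K z -> In y (nbrs K z) -> 0 < rate K nS lam A compat y z ->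
  pi z / mu nS lam A compat z <= pi y / mu nS lam A compat y.
Proof.
  intros Hz Hy Hr. destruct Hst as [Hnn [Hsum Hbal]].
  set (m := mu nS lam A compat).
  set (q := fun x : list nat => LamS K lam + A (length x) * Fl nS compat x).
  set (rt := rate K nS lam A compat).
  set (h := fun x => pi x / m x).
  set (c := h z).
  set (g := fun x => Rmin (h x) c).
  assert (Hmpos : forall x, valid_state K x -> 0 < m x) by (intros; apply (mu_pos K); auto).
  assert (Hnbv : forall x y, In y (nbrs K x) -> valid_state K y).
  { intros x y0 H. unfold nbrs in H. apply in_app_iff in H as [H|H].
    - apply states_in in H; tauto.
    - destruct (length x); [contradiction|]. apply states_in in H; tauto. }
  assert (Hmh : forall x, valid_state K x -> m x * h x = pi x).
  { intros x Hx. unfold h. specialize (Hmpos x Hx). field. lra. }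
  assert (Hc0 : 0 <= c).
  { unfold c, h. specialize (Hmpos z Hz). specialize (Hnn z Hz).
    apply Rdiv_le_0_compat; lra. }
  assert (Hg0 : forall x, valid_state K x -> 0 <= g x).
  { intros x Hx. unfold g. apply Rmin_glb; auto. unfold h.
    specialize (Hmpos x Hx). specialize (Hnn x Hx). apply Rdiv_le_0_compat; lra. }
  assert (Hq0 : forall x, 0 <= q x).
  { intros x. unfold q. pose proof (Fl_nonneg nS compat x).
    assert (0 <= LamS K lam).
    { unfold LamS. apply sumR_nonneg. intros c0 Hc0'. apply in_seq in Hc0'.
      specialize (hlam c0 ltac:(lia)). lra. }
    destruct (length x) eqn:E.
    - destruct x; [|discriminate]. rewrite Fl_nil. lra.
    - assert (0 < A (S n)) by (apply hA; lia). nra. }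
  assert (Hpb : forall x, valid_state K x ->
     pi x * q x = sumR (map (fun y => pi y * rt y x) (nbrs K x))).
  { intros x Hx. unfold q. rewrite <- out_rate by auto. apply Hbal; auto. }
  assert (Hmb : forall x, valid_state K x ->
     m x * q x = sumR (map (fun y => m y * rt y x) (nbrs K x))).
  { intros x Hx. unfold q. rewrite <- out_rate by auto. apply mu_balance; auto. }
  set (Dterm := fun x => m x * q x * g x - sumR (map (fun y => m y * rt y x * g y) (nbrs K x))).
  assert (HD1 : forall x, valid_state K x -> 0 <= Dterm x).
  { intros x Hx. unfold Dterm.
    assert (Ha : sumR (map (fun y => m y * rt y x * g y) (nbrs K x)) <= pi x * q x).
    { rewrite Hpb by auto. apply sumR_le. intros y0 Hy0.
      rewrite <- (Hmh y0) by eauto. pose proof (Hmpos y0 (Hnbv _ _ Hy0)).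
      pose proof (rate_nonneg K nS lam A compat hlam hA y0 x). fold rt in H0.
      assert (g y0 <= h y0) by apply Rmin_l.
      assert (0 <= m y0 * rt y0 x) by nra. nra. }
    assert (Hb : sumR (map (fun y => m y * rt y x * g y) (nbrs K x)) <= c * (m x * q x)).
    { rewrite Hmb by auto. rewrite <- sumR_scal. apply sumR_le. intros y0 Hy0.
      pose proof (Hmpos y0 (Hnbv _ _ Hy0)).
      pose proof (rate_nonneg K nS lam A compat hlam hA y0 x). fold rt in H0.
      assert (g y0 <= c) by apply Rmin_r.
      assert (0 <= m y0 * rt y0 x) by nra. nra. }
    destruct (Rle_dec (h x) c) as [Hle|Hgt].
    - assert (Hgx : g x = h x) by (unfold g; apply Rmin_left; auto). rewrite Hgx.
      rewrite <- (Hmh x Hx) in Ha. replace (m x * q x * h x) with (m x * h x * q x) by ring. lra.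
    - assert (Hgx : g x = c) by (unfold g; apply Rmin_right; lra). rewrite Hgx.
      replace (m x * q x * c) with (c * (m x * q x)) by ring. lra. }
  set (D := fun N => sumR (map Dterm (states K N))).
  set (U := fun N => sumR (map (fun x => m x * g x * LamS K lam) (states K N))).
  set (Dn := fun N => sumR (map (fun x => m x * g x * (A N * Fl nS compat x)) (states K N))).
  assert (Hrow : forall N, D N = U N + Dn N - prevR U N - Dn (S N)).
  { intros N. unfold D, Dterm.
    rewrite (sumR_ext _ (fun x => m x * q x * g x + (-1) *
        sumR (map (fun y => m y * rt y x * g y) (nbrs K x)))) by (intros; ring).
    rewrite sumR_plus, sumR_scal.
    assert (E1 : sumR (map (fun x => m x * q x * g x) (states K N)) = U N + Dn N).
    { unfold U, Dn. rewrite <- sumR_plus. apply sumR_ext. intros x Hx.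
      apply states_in in Hx as [Hl _]. unfold q. rewrite Hl. ring. }
    assert (E2 : sumR (map (fun x => sumR (map (fun y => m y * rt y x * g y) (nbrs K x))) (states K N))
               = Dn (S N) + prevR U N).
    { rewrite (sumR_ext _ (fun x => sumR (map (fun y => m y * rt y x * g y)
           (states K (S N) ++ match N with O => [] | S m0 => states K m0 end)))).
      2:{ intros x Hx. apply states_in in Hx as [Hl _]. rewrite (nbrs_len K x N Hl). reflexivity. }
      rewrite (sumR_ext _ (fun x => sumR (map (fun y => m y * rt y x * g y) (states K (S N))) +
          sumR (map (fun y => m y * rt y x * g y) match N with O => [] | S m0 => states K m0 end)))
        by (intros; rewrite map_app, sumR_app; reflexivity).
      rewrite sumR_plus. f_equal.
      - rewrite sumR_swap. unfold Dn. apply sumR_ext. intros y0 Hy0.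
        apply states_in in Hy0 as [Hl Hv].
        rewrite (sumR_ext _ (fun x => (m y0 * g y0) * rt y0 x)) by (intros; ring).
        rewrite sumR_scal. unfold rt. rewrite (row_down K nS lam A compat y0 N Hv Hl).
        rewrite Hl. ring.
      - destruct N as [|N']; simpl.
        + lra.
        + rewrite sumR_swap. unfold U. apply sumR_ext. intros y0 Hy0.
          apply states_in in Hy0 as [Hl Hv].
          rewrite (sumR_ext _ (fun x => (m y0 * g y0) * rt y0 x)) by (intros; ring).
          rewrite sumR_scal. unfold rt. change (flat_map (fun x => map (fun c0 => x ++ [c0]) (seq 0 K)) (states K N')) with (states K (S N')). rewrite <- Hl, (row_up K nS lam A compat y0 Hv).
          ring. }
    rewrite E1, E2. ring. }
  assert (Htele := abstract_tele D U Dn Hrow).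
  assert (HDn0 : Dn 0%nat = 0). { unfold Dn. simpl. rewrite Fl_nil. ring. }
  specialize (Htele HDn0).
  assert (Hzero : forall n, D n = 0).
  { apply (abstract_zero D U Dn (fun N => sumR (map pi (states K N))) (LamS K lam) 1).
    - unfold LamS. apply sumR_nonneg. intros c0 Hc0'. apply in_seq in Hc0'.
      specialize (hlam c0 ltac:(lia)). lra.
    - intros N. unfold D. apply sumR_nonneg. intros x Hx. apply HD1. apply states_in in Hx; tauto.
    - auto.
    - intros M. unfold Dn. apply sumR_nonneg. intros x Hx. apply states_in in Hx as [Hl Hv].
      pose proof (Hmpos x Hv). pose proof (Hg0 x Hv). pose proof (Fl_nonneg nS compat x).
      destruct M as [|M].
      + destruct x; [|discriminate]. rewrite Fl_nil. lra.
      + assert (0 < A (S M)) by (apply hA; lia).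
        apply Rmult_le_pos; [nra|]. nra.
    - intros M. unfold U. rewrite <- sumR_scal. apply sumR_le. intros x Hx.
      apply states_in in Hx as [Hl Hv]. pose proof (Hmpos x Hv).
      assert (g x <= h x) by apply Rmin_l. rewrite <- (Hmh x Hv).
      assert (0 <= LamS K lam).
      { unfold LamS. apply sumR_nonneg. intros c0 Hc0'. apply in_seq in Hc0'.
        specialize (hlam c0 ltac:(lia)). lra. }
      assert (m x * g x <= m x * h x) by nra. nra.
    - intros M. apply sumR_nonneg. intros x Hx. apply Hnn. apply states_in in Hx; tauto.
    - auto. }
  assert (HDz : Dterm z = 0).
  { apply (sumR_all_zero Dterm (states K (length z))).
    - intros x Hx. apply HD1. apply states_in in Hx; tauto.
    - apply Hzero.
    - apply states_complete; auto. }
  assert (Hgz : g z = c). { unfold g. apply Rmin_left. unfold c. lra. }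
  unfold Dterm in HDz. rewrite Hgz in HDz.
  assert (Hs0 : sumR (map (fun y => m y * rt y z * (c - g y)) (nbrs K z)) = 0).
  { rewrite (sumR_ext _ (fun y => c * (m y * rt y z) + (-1) * (m y * rt y z * g y))) by (intros; ring).
    rewrite sumR_plus, !sumR_scal. rewrite <- Hmb by auto. lra. }
  assert (Hnn2 : forall y0, In y0 (nbrs K z) -> 0 <= m y0 * rt y0 z * (c - g y0)).
  { intros y0 Hy0; pose proof (Hmpos y0 (Hnbv _ _ Hy0)).
    pose proof (rate_nonneg K nS lam A compat hlam hA y0 z) as Hrt; fold rt in Hrt.
    assert (g y0 <= c) by apply Rmin_r. assert (0 <= m y0 * rt y0 z) by nra. nra. }
  pose proof (sumR_all_zero _ _ Hnn2 Hs0 y Hy) as Hterm.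
  simpl in Hterm. fold rt in Hr. pose proof (Hmpos y (Hnbv _ _ Hy)).
  assert (c - g y = 0).
  { assert (0 < m y * rt y z) by nra.
    apply (Rmult_eq_reg_l (m y * rt y z)); [|lra]. rewrite Rmult_0_r. exact Hterm. }
  change (c <= h y). unfold g in H0. destruct (Rle_dec (h y) c) as [Hle|]; [|lra].
  rewrite Rmin_left in H0 by auto. lra.
Qed.


Lemma pi_form K nS lam A compat
  (hlam : forall c, (c < K)%nat -> 0 < lam c)
  (hA : forall n, (1 <= n)%nat -> 0 < A n)
  (hF : forall c, (c < K)%nat -> exists s, (s < nS)%nat /\ compat s c = true)
  pi (Hst : stationary K nS lam A compat pi) x :
  valid_state K x -> pi x = pi [] * mu nS lam A compat x.
Proof.
  set (h := fun x => pi x / mu nS lam A compat x).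
  assert (Hup : forall x, valid_state K x -> h x <= h []).
  { intros x0. induction x0 as [|d x0 IH] using rev_ind; intros Hv; [lra|].
    apply valid_app in Hv as [Hv Hd]. inversion Hd as [|? ? Hd' _]; subst.
    apply (Rle_trans _ (h x0)); [|auto].
    apply (uniq_step K nS lam A compat hlam hA hF pi Hst).
    - apply valid_app; split; auto.
    - rewrite (nbrs_len K _ (S (length x0))) by (rewrite length_app; simpl; lia).
      apply in_app_iff; right. apply states_complete; auto.
    - rewrite rate_split. pose proof (srv_nonneg nS A compat hA x0 (x0 ++ [d])).
      rewrite arr_snoc by auto. destruct list_eq_dec; [|congruence].
      specialize (hlam d Hd'). lra. }
  assert (Hdown : forall x, valid_state K x -> h [] <= h x).
  { intros x0. induction x0 as [|d x0 IH]; intros Hv; [lra|].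
    inversion Hv as [|? ? Hd' Hv']; subst.
    apply (Rle_trans _ (h x0)); [auto|].
    apply (uniq_step K nS lam A compat hlam hA hF pi Hst).
    - auto.
    - unfold nbrs. apply in_app_iff; left. apply states_complete; auto.
    - rewrite rate_split. pose proof (arr_nonneg K lam hlam (d :: x0) x0).
      destruct (hF d Hd') as [s [Hs Hcs]].
      assert (0 < srv nS A compat (d :: x0) x0).
      { unfold srv. apply (sumR_pos _ _ s).
        - intros s' _. destruct existsb; [destruct list_eq_dec|]; try lra.
          left. apply hA. simpl. lia.
        - apply in_seq; lia.
        - simpl. rewrite Hcs. simpl. destruct list_eq_dec; [|congruence]. apply hA; simpl; lia. }
      lra. }
  intros Hv. assert (h x = h []) by (apply Rle_antisym; auto).
  unfold h in H. unfold mu in H at 2. simpl in H. rewrite Rdiv_1_r in H.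
  pose proof (mu_pos K nS lam A compat hlam hA hF x Hv).
  rewrite <- H. field. lra.
Qed.


Definition sn (l : list (nat * nat)) : nat := fold_right plus 0%nat (map snd l).

Lemma sn_app l1 l2 : sn (l1 ++ l2) = (sn l1 + sn l2)%nat.
Proof. induction l1; simpl; auto. unfold sn in *; simpl. rewrite IHl1. lia. Qed.

Lemma incr_last_snoc l a b : incr_last (l ++ [(a, b)]) = l ++ [(a, S b)].
Proof.
  assert (Hc : forall q l1, l1 <> [] -> incr_last (q :: l1) = q :: incr_last l1).
  { intros q [|r l1] H; [congruence| reflexivity]. }
  induction l as [|q l IH]; [reflexivity|].
  cbn [app]. rewrite Hc, IH; auto. destruct l; discriminate.
Qed.

Lemma tok_snoc x c : token_state (x ++ [c]) = token_step (token_state x) c.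
Proof. unfold token_state. rewrite fold_left_app. reflexivity. Qed.

Lemma snoc_cases {T} (l : list T) : l = [] \/ exists l0 a, l = l0 ++ [a].
Proof. destruct l as [|a l] using rev_ind; [left; auto| right; eauto]. Qed.

Lemma existsb_fst_in (t : list (nat * nat)) c :
  existsb (fun p => Nat.eqb (fst p) c) t = true <-> In c (map fst t).
Proof.
  rewrite existsb_exists. split.
  - intros [p [Hp He]]. apply Nat.eqb_eq in He. subst. apply in_map; auto.
  - intros H. apply in_map_iff in H as [p [<- Hp]]. exists p; split; auto. apply Nat.eqb_refl.
Qed.

Lemma fst_token_step t c :
  map fst (token_step t c) =
  if existsb (fun p => Nat.eqb (fst p) c) t then map fst t else map fst t ++ [c].
Proof.
  unfold token_step. destruct existsb eqn:E.
  - destruct (snoc_cases t) as [->|[t0 [[a b] ->]]]; [discriminate|].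
    rewrite incr_last_snoc, !map_app. reflexivity.
  - rewrite map_app. reflexivity.
Qed.

Lemma tsize_sn ts : tsize ts = (length ts + sn ts)%nat.
Proof. reflexivity. Qed.

Lemma tsize_token_step t c : tsize (token_step t c) = S (tsize t).
Proof.
  rewrite !tsize_sn. unfold token_step.
  destruct existsb eqn:E.
  - destruct (snoc_cases t) as [->|[t0 [[a b] ->]]]; [discriminate|].
    rewrite incr_last_snoc, !sn_app, !length_app. unfold sn; simpl. lia.
  - rewrite !sn_app, !length_app. unfold sn; simpl. lia.
Qed.

Lemma tok_tsize x : tsize (token_state x) = length x.
Proof.
  induction x as [|c x IH] using rev_ind; [reflexivity|].
  rewrite tok_snoc, tsize_token_step, IH, length_app. simpl. lia.
Qed.

Lemma tok_in x c : In c x <-> In c (map fst (token_state x)).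
Proof.
  induction x as [|d x IH] using rev_ind; [simpl; tauto|].
  rewrite tok_snoc, fst_token_step. rewrite in_app_iff. simpl.
  destruct existsb eqn:E.
  - apply existsb_fst_in in E. split.
    + intros [H|[<-|[]]]; [apply IH; auto| auto].
    + intros H; left; apply IH; auto.
  - rewrite in_app_iff. simpl. rewrite IH. tauto.
Qed.

Lemma tok_valid K x : valid_state K x -> valid_token K (token_state x).
Proof.
  induction x as [|d x IH] using rev_ind; intros Hv.
  - split; constructor.
  - apply valid_app in Hv as [Hv Hd]. inversion Hd as [|? ? Hd' _]; subst.
    destruct (IH Hv) as [Hnd Hf].
    rewrite tok_snoc. unfold valid_token. rewrite fst_token_step.
    destruct existsb eqn:E; [split; auto|].
    split.
    + apply NoDup_app; auto. repeat constructor; auto.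
      intros a Ha [<-|[]]. apply existsb_fst_in in Ha. congruence.
    + apply Forall_app; split; auto.
Qed.

Lemma existsb_tok f x :
  existsb f x = existsb (fun p => f (fst p)) (token_state x).
Proof.
  apply Bool.eq_iff_eq_true. rewrite !existsb_exists. split.
  - intros [c [Hc Hf]]. apply tok_in in Hc. apply in_map_iff in Hc as [p [<- Hp]]. eauto.
  - intros [p [Hp Hf]]. exists (fst p). split; auto. apply tok_in. apply in_map; auto.
Qed.

Lemma Fl_tok nS compat x : Fl nS compat x = INR (Fcount nS compat (token_state x)).
Proof.
  unfold Fl, Fcount. rewrite sum_ind_count, Rmult_1_r. f_equal. f_equal.
  apply filter_ext. intros s. apply existsb_tok.
Qed.

Lemma token_step_new t c ts0 T :
  token_step t c = ts0 ++ [(T, 0%nat)] <->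
  (t = ts0 /\ c = T /\ ~ In c (map fst t)).
Proof.
  unfold token_step. destruct existsb eqn:E.
  - split.
    + destruct (snoc_cases t) as [->|[t0 [[a b] ->]]]; [discriminate|].
      rewrite incr_last_snoc. intros H. apply app_inj_tail in H as [_ H]. inversion H.
    + intros [_ [_ H]]. apply existsb_fst_in in E. contradiction.
  - split.
    + intros H. apply app_inj_tail in H as [-> H]. inversion H; subst. split; auto. split; auto.
      intros Hin. apply existsb_fst_in in Hin. congruence.
    + intros [-> [-> _]]. reflexivity.
Qed.

Lemma token_step_old t c ts0 T k :
  token_step t c = ts0 ++ [(T, S k)] <->
  (t = ts0 ++ [(T, k)] /\ In c (map fst t)).
Proof.
  unfold token_step. destruct existsb eqn:E.
  - apply existsb_fst_in in E as E'. split.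
    + destruct (snoc_cases t) as [->|[t0 [[a b] ->]]]; [discriminate|].
      rewrite incr_last_snoc. intros H. apply app_inj_tail in H as [-> H]. inversion H; subst.
      auto.
    + intros [-> _]. apply incr_last_snoc.
  - split.
    + intros H. apply app_inj_tail in H as [_ H]. inversion H.
    + intros [_ H]. apply existsb_fst_in in H. congruence.
Qed.


Definition Gf nS lam A compat (P : list (nat * nat)) (p : nat * nat) : R :=
  lam (fst p) / (A (length P) * LamP lam P) *
  (LamP lam P / INR (Fcount nS compat P)) ^ (S (snd p)).

Definition P1w nS lam A compat (ts : list (nat * nat)) : R :=
  prodR (map (fun j =>
      let P := firstn j ts in
      let Tj := fst (nth (j - 1) ts (0%nat, 0%nat)) in
      let nj := snd (nth (j - 1) ts (0%nat, 0%nat)) in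
      lam Tj / (A j * LamP lam P) *
      (LamP lam P / INR (Fcount nS compat P)) ^ (S nj))
    (seq 1 (length ts))).

Definition Pr (A : nat -> R) a s := prodR (map (fun k => / A k) (seq a s)).

Lemma weight_split nS lam A compat ts :
  weight nS lam A compat ts = P1w nS lam A compat ts * Pr A (S (length ts)) (sn ts).
Proof.
  unfold weight, P1w, Pr. f_equal. f_equal. unfold sn.
  generalize (fold_right Init.Nat.add 0%nat (map snd ts)) as s.
  assert (H : forall s a, map (fun m => / A (length ts + m)%nat) (seq a s) =
                          map (fun k => / A k) (seq (length ts + a) s)).
  { induction s; intros a; simpl; auto. rewrite IHs. do 3 f_equal. lia. }
  intros s. rewrite H. f_equal. f_equal. lia.
Qed.

Lemma P1w_snoc nS lam A compat ts0 p :
  P1w nS lam A compat (ts0 ++ [p]) = P1w nS lam A compat ts0 * Gf nS lam A compat (ts0 ++ [p]) p.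
Proof.
  unfold P1w. rewrite length_app. simpl length. rewrite Nat.add_1_r, seq_S, map_app, prodR_app.
  f_equal.
  - f_equal. apply map_ext_in. intros j Hj. apply in_seq in Hj.
    rewrite firstn_app. replace (j - length ts0)%nat with 0%nat by lia. simpl. rewrite app_nil_r.
    rewrite app_nth1 by lia. reflexivity.
  - unfold prodR; cbn [map fold_right]. cbv zeta. rewrite Rmult_1_r. unfold Gf.
    rewrite firstn_all2 by (rewrite length_app; simpl; lia).
    replace (1 + length ts0 - 1)%nat with (length ts0) by lia. rewrite nth_middle.
    rewrite length_app. simpl. rewrite Nat.add_1_r. reflexivity.
Qed.

Lemma Pr_S_r A a s : Pr A a (S s) = Pr A a s * / A (a + s)%nat.
Proof. unfold Pr. rewrite seq_S, map_app, prodR_app. simpl. ring. Qed.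

Lemma Pr_S_l A a s : Pr A a (S s) = / A a * Pr A (S a) s.
Proof. reflexivity. Qed.

Lemma LamP_fst lam l1 l2 : map fst l1 = map fst l2 -> LamP lam l1 = LamP lam l2.
Proof. intros H. unfold LamP. rewrite <- (map_map fst lam), H, map_map. reflexivity. Qed.

Lemma existsb_map_fst (f : nat -> bool) (l : list (nat * nat)) :
  existsb (fun p => f (fst p)) l = existsb f (map fst l).
Proof. induction l; simpl; auto. rewrite IHl. reflexivity. Qed.

Lemma Fcount_fst nS compat l1 l2 : map fst l1 = map fst l2 -> Fcount nS compat l1 = Fcount nS compat l2.
Proof.
  intros H. unfold Fcount. f_equal. apply filter_ext. intros s.
  rewrite !existsb_map_fst, H. reflexivity.
Qed.

Lemma weight_new nS lam A compat ts0 T :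
  LamP lam (ts0 ++ [(T, 0%nat)]) <> 0 -> INR (Fcount nS compat (ts0 ++ [(T, 0%nat)])) <> 0 ->
  (forall n, (1 <= n)%nat -> 0 < A n) ->
  weight nS lam A compat (ts0 ++ [(T, 0%nat)]) =
  weight nS lam A compat ts0 * (lam T / (A (tsize (ts0 ++ [(T, 0%nat)])) *
       INR (Fcount nS compat (ts0 ++ [(T, 0%nat)])))).
Proof.
  intros HL HF hA. rewrite !weight_split, P1w_snoc, sn_app, tsize_sn, sn_app, length_app.
  unfold Gf. simpl. rewrite !Nat.add_0_r, !Nat.add_1_r.
  set (i0 := length ts0). set (S0 := sn ts0).
  assert (E : Pr A (S i0) (S S0) = / A (S i0) * Pr A (S (S i0)) S0) by apply Pr_S_l.
  rewrite Pr_S_r in E. rewrite length_app in *. simpl length in *. rewrite Nat.add_1_r.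
  assert (0 < A (S i0)) by (apply hA; lia).
  assert (0 < A (S (i0 + S0))) by (apply hA; lia).
  replace (S i0 + S0)%nat with (S (i0 + S0)) in E by lia.
  replace (Pr A (S (S i0)) S0) with (A (S i0) * (Pr A (S i0) S0 * / A (S (i0 + S0)))).
  2:{ rewrite E. field. lra. }
  replace (i0 + 1 + S0)%nat with (S (i0 + S0)) by lia.
  fold i0. replace (S i0 + S0)%nat with (S (i0 + S0)) by lia. field. repeat split; lra.
Qed.

Lemma weight_old nS lam A compat ts0 T k :
  LamP lam (ts0 ++ [(T, k)]) <> 0 -> INR (Fcount nS compat (ts0 ++ [(T, k)])) <> 0 ->
  (forall n, (1 <= n)%nat -> 0 < A n) ->
  weight nS lam A compat (ts0 ++ [(T, S k)]) =
  weight nS lam A compat (ts0 ++ [(T, k)]) *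
   (LamP lam (ts0 ++ [(T, k)]) / (A (tsize (ts0 ++ [(T, S k)])) *
       INR (Fcount nS compat (ts0 ++ [(T, k)])))).
Proof.
  intros HL HF hA. rewrite !weight_split, !P1w_snoc, !sn_app, tsize_sn, sn_app, !length_app.
  assert (HfL : map fst (ts0 ++ [(T, S k)]) = map fst (ts0 ++ [(T, k)])) by (rewrite !map_app; reflexivity).
  unfold Gf. rewrite (LamP_fst lam _ _ HfL), (Fcount_fst nS compat _ _ HfL), !length_app.
  simpl. change (sn [(T, S k)]) with (S k + 0)%nat. change (sn [(T, k)]) with (k + 0)%nat.
  change (fold_right Init.Nat.add 0%nat (map snd ts0)) with (sn ts0).
  rewrite !Nat.add_0_r.
  replace (sn ts0 + S k)%nat with (S (sn ts0 + k)) by lia.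
  rewrite Pr_S_r.
  replace (S (length ts0 + 1) + (sn ts0 + k))%nat with (length ts0 + 1 + S (sn ts0 + k))%nat by lia.
  assert (0 < A (length ts0 + 1 + S (sn ts0 + k))%nat) by (apply hA; lia).
  assert (0 < A (length ts0 + 1)%nat) by (apply hA; lia).
  field. repeat split; auto; lra.
Qed.



Lemma sum_in_fst K lam t : valid_token K t ->
  sumR (map (fun c => if in_dec Nat.eq_dec c (map fst t) then lam c else 0) (seq 0 K)) = LamP lam t.
Proof.
  induction t as [|p t IH]; intros [Hnd Hf].
  - apply sumR_zero. intros; simpl. reflexivity.
  - simpl in Hnd, Hf. inversion Hnd; subst. inversion Hf; subst.
    change (LamP lam (p :: t)) with (lam (fst p) + LamP lam t).
    rewrite <- IH by (split; auto).
    rewrite <- (sum_seq_ind K (fst p) lam) by auto.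
    rewrite <- sumR_plus. apply sumR_ext. intros c _.
    change (map fst (p :: t)) with (fst p :: map fst t).
    destruct (in_dec Nat.eq_dec c (fst p :: map fst t)) as [Hi|Hi];
    destruct (Nat.eq_dec c (fst p)) as [E|E];
    destruct (in_dec Nat.eq_dec c (map fst t)) as [Hi'|Hi']; try lra.
    all: exfalso.
    all: try (subst; contradiction).
    all: try (apply Hi; simpl; auto; fail).
    destruct Hi; [congruence|contradiction].
Qed.

Lemma LamP_pos K lam (hlam : forall c, (c < K)%nat -> 0 < lam c) t :
  Forall (fun T => (T < K)%nat) (map fst t) -> 0 <= LamP lam t.
Proof.
  induction t as [|p t IH]; intros Hf; unfold LamP; simpl; [lra|].
  inversion Hf; subst. fold (LamP lam t). specialize (hlam (fst p) H1). specialize (IH H2). lra.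
Qed.

Lemma LamP_snoc_pos K lam (hlam : forall c, (c < K)%nat -> 0 < lam c) ts0 p :
  valid_token K (ts0 ++ [p]) -> 0 < LamP lam (ts0 ++ [p]).
Proof.
  intros [_ Hf]. rewrite map_app in Hf. apply Forall_app in Hf as [Hf1 Hf2]. inversion Hf2; subst.
  unfold LamP. rewrite map_app, sumR_app. fold (LamP lam ts0). simpl.
  pose proof (LamP_pos K lam hlam ts0 Hf1). specialize (hlam _ H1). lra.
Qed.

Lemma Fcount_pos K nS compat
  (hF : forall c, (c < K)%nat -> exists s, (s < nS)%nat /\ compat s c = true) ts0 p :
  valid_token K (ts0 ++ [p]) -> 0 < INR (Fcount nS compat (ts0 ++ [p])).
Proof.
  intros [_ Hf]. rewrite map_app in Hf. apply Forall_app in Hf as [_ Hf2]. inversion Hf2; subst.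
  destruct (hF _ H1) as [s [Hs Hc]]. apply lt_0_INR. unfold Fcount.
  destruct (filter _ _) eqn:E; simpl; [|lia].
  assert (In s (filter (fun s0 => existsb (fun p0 => compat s0 (fst p0)) (ts0 ++ [p])) (seq 0 nS))).
  { apply filter_In. split; [apply in_seq; lia|]. apply existsb_exists. exists p. split; auto.
    apply in_app_iff; simpl; auto. }
  rewrite E in H. contradiction.
Qed.

Lemma valid_token_prefix K ts0 p : valid_token K (ts0 ++ [p]) -> valid_token K ts0.
Proof.
  intros [Hnd Hf]. rewrite map_app in *. split.
  - apply NoDup_app_remove_r in Hnd; auto.
  - apply Forall_app in Hf; tauto.
Qed.

Lemma lump K nS lam A compat
  (hlam : forall c, (c < K)%nat -> 0 < lam c)
  (hA : forall n, (1 <= n)%nat -> 0 < A n)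
  (hF : forall c, (c < K)%nat -> exists s, (s < nS)%nat /\ compat s c = true) :
  forall N ts, tsize ts = N -> valid_token K ts ->
  token_marginal K (mu nS lam A compat) ts = weight nS lam A compat ts.
Proof.
  set (m := mu nS lam A compat).
  induction N as [|N IH]; intros ts Hts Hv.
  - destruct ts; [|discriminate]. unfold token_marginal. simpl.
    unfold weight, P1w. simpl. unfold m, mu. simpl. ring.
  - destruct (snoc_cases ts) as [->|[ts0 [[T n] ->]]]; [discriminate|].
    unfold token_marginal. rewrite Hts, sum_states_S.
    assert (HL := LamP_snoc_pos K lam hlam ts0 (T, n) Hv).
    assert (HFc := Fcount_pos K nS compat hF ts0 (T, n) Hv).
    assert (Hv0 := valid_token_prefix K ts0 (T, n) Hv).
    assert (Hvv := Hv).
    destruct Hv as [Hnd Hf]. rewrite map_app in Hnd, Hf. simpl in Hnd, Hf.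
    apply Forall_app in Hf as [Hf0 HfT]. inversion HfT as [|? ? HT _]; subst.
    assert (HTn : ~ In T (map fst ts0)).
    { intros Hin. apply NoDup_remove_2 in Hnd. apply Hnd. rewrite app_nil_r. auto. }
    destruct n as [|k].
    +
      assert (Hts0 : tsize ts0 = N).
      { rewrite tsize_sn, length_app, sn_app in Hts. rewrite tsize_sn.
        unfold sn in Hts at 2. simpl in Hts. lia. }
      set (r := lam T / (A (S N) * INR (Fcount nS compat (ts0 ++ [(T, 0%nat)])))).
      transitivity (sumR (map (fun x' => (if tok_dec (token_state x') ts0 then m x' else 0) * r) (states K N))).
      * apply sumR_ext. intros x' Hx'. apply states_in in Hx' as [Hl Hvx].
        destruct (tok_dec (token_state x') ts0) as [E|E].
        -- transitivity (m (x' ++ [T])).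
           ++ rewrite <- (sum_seq_ind K T (fun c => m (x' ++ [c]))) by auto.
              apply sumR_ext. intros c _. rewrite tok_snoc.
              destruct (tok_dec (token_step (token_state x') c) (ts0 ++ [(T, 0%nat)])) as [E1|E1];
              destruct (Nat.eq_dec c T) as [E2|E2]; auto.
              ** apply token_step_new in E1. tauto.
              ** exfalso. apply E1. apply token_step_new. rewrite E. subst. auto.
           ++ unfold m. rewrite mu_snoc, Fl_tok, tok_snoc, E, Hl. unfold r.
              replace (token_step ts0 T) with (ts0 ++ [(T, 0%nat)]) by (symmetry; apply token_step_new; auto).
              reflexivity.
        -- rewrite Rmult_0_l. apply sumR_zero. intros c _. rewrite tok_snoc.
           destruct tok_dec as [E1|]; auto. apply token_step_new in E1. tauto.
      * rewrite sumR_scalr. rewrite <- Hts0.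
        change (sumR (map (fun x' => if tok_dec (token_state x') ts0 then m x' else 0) (states K (tsize ts0))))
          with (token_marginal K m ts0).
        rewrite (IH ts0 Hts0 Hv0). rewrite weight_new; auto; try lra.
        unfold r. rewrite Hts. reflexivity.
    +
      set (ts1 := ts0 ++ [(T, k)]).
      assert (Hts1 : tsize ts1 = N).
      { unfold ts1. rewrite tsize_sn, length_app, sn_app in Hts. rewrite tsize_sn, length_app, sn_app.
        unfold sn in Hts at 2. unfold sn at 2. simpl in Hts |- *. lia. }
      assert (Hf1 : map fst (ts0 ++ [(T, S k)]) = map fst ts1) by (unfold ts1; rewrite !map_app; reflexivity).
      assert (Hv1 : valid_token K ts1).
      { destruct Hvv as [A1 A2]. rewrite Hf1 in A1, A2. split; auto. }
      set (r := LamP lam ts1 / (A (S N) * INR (Fcount nS compat ts1))).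
      transitivity (sumR (map (fun x' => (if tok_dec (token_state x') ts1 then m x' else 0) * r) (states K N))).
      * apply sumR_ext. intros x' Hx'. apply states_in in Hx' as [Hl Hvx].
        destruct (tok_dec (token_state x') ts1) as [E|E].
        -- transitivity (sumR (map (fun c => if in_dec Nat.eq_dec c (map fst ts1) then
                m x' * / (A (S N) * INR (Fcount nS compat ts1)) * lam c else 0) (seq 0 K))).
           ++ apply sumR_ext. intros c _. rewrite tok_snoc, E.
              destruct (tok_dec (token_step ts1 c) (ts0 ++ [(T, S k)])) as [E1|E1];
              destruct (in_dec Nat.eq_dec c (map fst ts1)) as [E2|E2].
              ** unfold m. rewrite mu_snoc, Fl_tok, tok_snoc, E, E1, Hl.
                 rewrite (Fcount_fst nS compat _ _ Hf1). unfold Rdiv. ring.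
              ** apply token_step_old in E1. tauto.
              ** exfalso. apply E1. apply token_step_old. auto.
              ** reflexivity.
           ++ rewrite (sumR_ext _ (fun c => (m x' * / (A (S N) * INR (Fcount nS compat ts1))) *
                 (if in_dec Nat.eq_dec c (map fst ts1) then lam c else 0)))
                by (intros; destruct in_dec; ring).
              rewrite sumR_scal, sum_in_fst by auto. unfold r. unfold Rdiv. ring.
        -- rewrite Rmult_0_l. apply sumR_zero. intros c _. rewrite tok_snoc.
           destruct tok_dec as [E1|]; auto. apply token_step_old in E1. tauto.
      * rewrite sumR_scalr. rewrite <- Hts1.
        change (sumR (map (fun x' => if tok_dec (token_state x') ts1 then m x' else 0) (states K (tsize ts1))))
          with (token_marginal K m ts1).
        rewrite (IH ts1 Hts1 Hv1). unfold ts1. rewrite weight_old; auto.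
        -- unfold r. rewrite Hts. reflexivity.
        -- fold ts1. rewrite <- (LamP_fst lam _ _ Hf1). lra.
        -- fold ts1. rewrite <- (Fcount_fst nS compat _ _ Hf1). lra.
Qed.


Lemma level_sum K nS lam A compat
  (hlam : forall c, (c < K)%nat -> 0 < lam c)
  (hA : forall n, (1 <= n)%nat -> 0 < A n)
  (hF : forall c, (c < K)%nat -> exists s, (s < nS)%nat /\ compat s c = true) N :
  sumR (map (mu nS lam A compat) (states K N)) =
  sumR (map (weight nS lam A compat) (tstates K N)).
Proof.
  set (m := mu nS lam A compat).
  transitivity (sumR (map (fun x => sumR (map (fun ts =>
       if tok_dec (token_state x) ts then m x else 0) (tstates K N))) (states K N))).
  - apply sumR_ext. intros x Hx. symmetry.
    rewrite (sumR_single _ _ (token_state x)).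
    + destruct tok_dec; congruence.
    + apply NoDup_nodup.
    + apply nodup_In. apply in_map. auto.
    + intros ts _ Hne. destruct tok_dec; congruence.
  - rewrite sumR_swap. apply sumR_ext. intros ts Hts.
    apply nodup_In in Hts. apply in_map_iff in Hts as [x0 [<- Hx0]].
    apply states_in in Hx0 as [Hl Hv].
    rewrite <- (lump K nS lam A compat hlam hA hF N (token_state x0)).
    + unfold token_marginal. rewrite tok_tsize, Hl. reflexivity.
    + rewrite tok_tsize; auto.
    + apply tok_valid; auto.
Qed.

Lemma sum_f_R0_ext (a b : nat -> R) n : (forall i, a i = b i) -> sum_f_R0 a n = sum_f_R0 b n.
Proof. intros H; induction n; simpl; rewrite ?IHn, ?H; auto. Qed.

Lemma infinite_sum_ext (a b : nat -> R) l : (forall i, a i = b i) -> infinite_sum a l -> infinite_sum b l.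
Proof. intros H Ha eps He. destruct (Ha eps He) as [N HN]. exists N. intros n Hn.
  rewrite <- (sum_f_R0_ext a b n H). auto. Qed.

Lemma infinite_sum_scal (a : nat -> R) l k : infinite_sum a l -> infinite_sum (fun n => k * a n) (k * l).
Proof.
  intros Ha eps He.
  assert (Hs : forall n, sum_f_R0 (fun n => k * a n) n = k * sum_f_R0 a n).
  { induction n; simpl; [ring| rewrite IHn; ring]. }
  destruct (Ha (eps / (Rabs k + 1))) as [N HN].
  { apply Rdiv_lt_0_compat; [lra|]. pose proof (Rabs_pos k). lra. }
  exists N. intros n Hn. rewrite Hs. unfold Rdist in *.
  replace (k * sum_f_R0 a n - k * l) with (k * (sum_f_R0 a n - l)) by ring.
  rewrite Rabs_mult. specialize (HN n Hn). pose proof (Rabs_pos k).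
  pose proof (Rabs_pos (sum_f_R0 a n - l)).
  apply (Rle_lt_trans _ (Rabs k * (eps / (Rabs k + 1)))).
  - apply Rmult_le_compat_l; lra.
  - apply (Rmult_lt_reg_r (Rabs k + 1)); [lra|]. field_simplify; [|lra]. nra.
Qed.

Lemma inf_sum_ge (a : nat -> R) l : (forall n, 0 <= a n) -> infinite_sum a l -> a 0%nat <= l.
Proof.
  intros Hp Ha. destruct (Rle_lt_dec (a 0%nat) l) as [|Hlt]; auto.
  destruct (Ha (a 0%nat - l)) as [N HN]; [lra|].
  specialize (HN N (le_n N)). unfold Rdist in HN.
  pose proof (partial_ge a Hp 0 N ltac:(lia)).
  rewrite Rabs_right in HN by lra. lra.
Qed.


Theorem mainTheorem12 (K nS : nat) (lam A : nat -> R)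
  (compat : nat -> nat -> bool)
  (hlam : forall c, (c < K)%nat -> 0 < lam c)
  (hA : forall n, (1 <= n)%nat -> 0 < A n)
  (hF : forall c, (c < K)%nat -> exists s, (s < nS)%nat /\ compat s c = true)
  (Z : R)
  (hZ : infinite_sum
          (fun N => sumR (map (weight nS lam A compat) (tstates K N))) Z) :
  (exists pi, stationary K nS lam A compat pi) /\
  (forall pi, stationary K nS lam A compat pi ->
     token_marginal K pi [] * Z = 1 /\
     (forall ts, valid_token K ts ->
        token_marginal K pi ts =
        token_marginal K pi [] * weight nS lam A compat ts)).
Proof.
  set (m := mu nS lam A compat).
  assert (hM : infinite_sum (fun N => sumR (map m (states K N))) Z).
  { apply (infinite_sum_ext (fun N => sumR (map (weight nS lam A compat) (tstates K N)))); auto.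
    intros N. symmetry. apply level_sum; auto. }
  assert (HZ1 : 1 <= Z).
  { assert (Hnn : forall n, 0 <= sumR (map m (states K n))).
    { intros n; apply sumR_nonneg; intros x Hx.
      left; apply (mu_pos K); auto; apply states_in in Hx; tauto. }
    apply (inf_sum_ge _ _ Hnn) in hM.
    simpl in hM. unfold m, mu in hM. simpl in hM. lra. }
  split.
  - exists (fun x => m x / Z). split; [|split].
    + intros x Hx. apply Rdiv_le_0_compat; [|lra]. left. apply (mu_pos K); auto.
    + replace 1 with (/ Z * Z) by (field; lra).
      apply (infinite_sum_ext (fun N => / Z * sumR (map m (states K N)))).
      * intros N. rewrite <- sumR_scal. apply sumR_ext. intros; unfold Rdiv; ring.
      * apply infinite_sum_scal; auto.
    + intros x Hx.
      rewrite (sumR_ext (fun y => (m y / Z) * rate K nS lam A compat y x) (fun y => / Z * (m y * rate K nS lam A compat y x))) by (intros; unfold Rdiv; ring).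
      rewrite sumR_scal. unfold m. rewrite <- mu_balance by auto. unfold Rdiv. ring.
  - intros pi Hst.
    assert (Hpf := pi_form K nS lam A compat hlam hA hF pi Hst).
    assert (H0 : token_marginal K pi [] = pi []).
    { unfold token_marginal. simpl. lra. }
    rewrite H0. split.
    + destruct Hst as [_ [Hs _]].
      apply (uniqueness_sum (fun N => sumR (map pi (states K N)))); auto.
      apply (infinite_sum_ext (fun N => pi [] * sumR (map m (states K N)))).
      * intros N. rewrite <- sumR_scal. apply sumR_ext. intros x Hx.
        symmetry. apply Hpf. apply states_in in Hx; tauto.
      * apply infinite_sum_scal; auto.
    + intros ts Hv.
      rewrite <- (lump K nS lam A compat hlam hA hF (tsize ts) ts eq_refl Hv).
      unfold token_marginal. rewrite <- sumR_scal. apply sumR_ext. intros x Hx.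
      apply states_in in Hx as [_ Hvx]. destruct tok_dec; [apply Hpf; auto| ring].
Qed.
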